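(* Let $\pi_3$ be the five-dimensional complex associative algebra with basis $e_1,\dots,e_5$ and nonzero products $e_1e_1=e_2$, $e_1e_2=e_2e_1=e_3$, $e_1e_4=e_5$, $e_4e_4=e_5$ (all other products of basis elements are zero). A linear operator on $\pi_3$ is a local derivation if and only if its matrix has the form $$\begin{pmatrix} b_{1,1} & 0 & 0 & 0 & 0 \\ b_{2,1} & 2b_{1,1} & 0 & 0 & 0 \\ b_{3,1} & b_{3,2} & 3b_{1,1} & b_{3,4} & 0 \\ 0 & 0 & 0 & b_{1,1} & 0 \\ b_{5,1} & 0 & 0 & b_{5,4} & 2b_{1,1} \end{pmatrix}$$ with $b_{1,1},b_{2,1},b_{3,1},b_{3,2},b_{3,4},b_{5,1},b_{5,4}\in\mathbb{C}$.
   Context: The matrix of a linear operator $T$ is taken with respect to the basis $e_1,\dots,e_5$, with the $j$-th column giving the coordinates of $T(e_j)$. A derivation of an algebra $A$ is a linear map $D$ with $D(xy)=D(x)y+xD(y)$ for all $x,y\in A$. A linear map $\nabla:A\to A$ is a local derivation if for every $x\in A$ there is a derivation $D_x$ of $A$ (depending on $x$) with $\nabla(x)=D_x(x)$. *)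

(* Defs.v *)
(* The complex numbers are modelled as R[i] = complex R for
   an arbitrary R : realType (any such R is isomorphic to the real numbers). *)
From HB Require Import structures.
From mathcomp Require Import all_boot all_order all_algebra.
From mathcomp Require Import reals.
From mathcomp Require Export complex.
Set Implicit Arguments. Unset Strict Implicit. Unset Printing Implicit Defensive.
Import Order.TTheory GRing.Theory Num.Theory.
Local Open Scope ring_scope.

Section Pi3.
Variable C : fieldType.

(* Coordinates w.r.t. e_1..e_5 (0-based index k stands for e_(k+1)). *)
Definition basis5 (k : nat) : 'cV[C]_5 := delta_mx (inord k) 0.

Definition pi3_table (i j : 'I_5) : 'cV[C]_5 :=
  match nat_of_ord i, nat_of_ord j with
  | 0, 0 => basis5 1
  | 0, 1 => basis5 2
  | 1, 0 => basis5 2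
  | 0, 3 => basis5 4
  | 3, 3 => basis5 4
  | _, _ => 0
  end.

Definition pi3_mul (x y : 'cV[C]_5) : 'cV[C]_5 :=
  \sum_(i < 5) \sum_(j < 5) (x i 0 * y j 0) *: pi3_table i j.

(* Linear operators are represented by their matrices (column j = T(e_j)),
   acting by T *m x. *)
Definition is_derivation (D : 'M[C]_5) : Prop :=
  forall x y : 'cV[C]_5,
    D *m pi3_mul x y = pi3_mul (D *m x) y + pi3_mul x (D *m y).

Definition is_local_derivation (T : 'M[C]_5) : Prop :=
  forall x : 'cV[C]_5, exists D : 'M[C]_5, is_derivation D /\ T *m x = D *m x.

Definition mx_of_rows (rows : seq (seq C)) : 'M[C]_5 :=
  \matrix_(i < 5, j < 5) nth 0 (nth [::] rows i) j.

End Pi3.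

(* Main.v *)
Require Import Defs.
From HB Require Import structures.
From mathcomp Require Import all_boot all_order all_algebra.
From mathcomp Require Import reals complex ring.
Set Implicit Arguments. Unset Strict Implicit. Unset Printing Implicit Defensive.
Import GRing.Theory Num.Theory.
Local Open Scope ring_scope.

Section H.
Variable C : fieldType.

Lemma sum5 (F : 'I_5 -> C) :
  \sum_(i < 5) F i = F (inord 0) + F (inord 1) + F (inord 2) + F (inord 3) + F (inord 4).
Proof.
rewrite !big_ord_recl big_ord0 addr0 /= !addrA.
by do 4? [congr (_ + _)]; congr F; apply/val_inj; rewrite /= inordK.
Qed.

Lemma cV5_ext (A B : 'cV[C]_5) :
  (forall k, (k < 5)%N -> A (inord k) 0 = B (inord k) 0) -> A = B.
Proof.
move=> H; apply/matrixP => i j; rewrite ord1.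
by have := H i (ltn_ord i); rewrite inord_val.
Qed.

Lemma M5_ext (A B : 'M[C]_5) :
  (forall k l, (k < 5)%N -> (l < 5)%N -> A (inord k) (inord l) = B (inord k) (inord l)) -> A = B.
Proof.
move=> H; apply/matrixP => i j.
by have := H i j (ltn_ord i) (ltn_ord j); rewrite !inord_val.
Qed.

Lemma mulcoord (M : 'M[C]_5) (v : 'cV[C]_5) k :
  (M *m v) (inord k) 0 = M (inord k) (inord 0) * v (inord 0) 0 + M (inord k) (inord 1) * v (inord 1) 0
   + M (inord k) (inord 2) * v (inord 2) 0 + M (inord k) (inord 3) * v (inord 3) 0
   + M (inord k) (inord 4) * v (inord 4) 0.
Proof. by rewrite mxE sum5. Qed.

Lemma basis_coord a k : (a < 5)%N -> (k < 5)%N ->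
  basis5 C a (inord k) 0 = if k == a then 1 else 0.
Proof.
move=> ha hk; rewrite /basis5 mxE eqxx andbT.
have -> : (inord k == inord a :> 'I_5) = (k == a).
  by apply/eqP/eqP => [/(congr1 val)|->//]; rewrite /= !inordK.
by case: (k == a).
Qed.

Lemma mul_basis (M : 'M[C]_5) a k : (a < 5)%N ->
  (M *m basis5 C a) (inord k) 0 = M (inord k) (inord a).
Proof.
move=> ha; rewrite mulcoord !basis_coord //.
case: a ha => [|[|[|[|[|a]]]]] //= _; rewrite !(mulr0, mulr1, addr0, add0r) //.
Qed.

Lemma mul_basis2 (M : 'M[C]_5) a b k : (a < 5)%N -> (b < 5)%N ->
  (M *m (basis5 C a + basis5 C b)) (inord k) 0 = M (inord k) (inord a) + M (inord k) (inord b).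
Proof. by move=> ha hb; rewrite mulmxDr mxE !mul_basis. Qed.

Lemma mxrows (rows : seq (seq C)) i j : (i < 5)%N -> (j < 5)%N ->
  mx_of_rows rows (inord i) (inord j) = nth 0 (nth [::] rows i) j.
Proof. by move=> hi hj; rewrite mxE !inordK. Qed.

Definition pmc (x y : 'cV[C]_5) (k : nat) : C :=
  let c := fun l => x (inord l) 0 in let d := fun l => y (inord l) 0 in
  match k with
  | 1 => c 0%N * d 0%N
  | 2 => c 0%N * d 1%N + c 1%N * d 0%N
  | 4 => c 0%N * d 3%N + c 3%N * d 3%N
  | _ => 0 end.

Lemma tableE a b k : (a < 5)%N -> (b < 5)%N -> (k < 5)%N ->
  pi3_table C (inord a) (inord b) (inord k) 0 =
  match a, b with
  | 0, 0 => if k == 1 then 1 else 0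
  | 0, 1 => if k == 2 then 1 else 0
  | 1, 0 => if k == 2 then 1 else 0
  | 0, 3 => if k == 4 then 1 else 0
  | 3, 3 => if k == 4 then 1 else 0
  | _, _ => 0 end.
Proof.
move=> ha hb hk; rewrite /pi3_table !inordK //.
case: a ha => [|[|[|[|[|a]]]]] //= _; case: b hb => [|[|[|[|[|b]]]]] //= _;
  rewrite ?basis_coord ?mxE //.
Qed.

Lemma pm_coord x y k : (k < 5)%N -> pi3_mul x y (inord k) 0 = pmc x y k.
Proof.
move=> hk; rewrite /pi3_mul summxE sum5.
rewrite !summxE !sum5 !mxE !tableE //.
case: k hk => [|[|[|[|[|k]]]]] //= _; rewrite !(mulr0, mulr1, addr0, add0r) //.
Qed.

End H.
Section M.
Variable C : fieldType.
Definition M7 (b11 b21 b31 b32 b34 b51 b54 : C) : 'M[C]_5 := mx_of_rows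
          [:: [:: b11; 0; 0; 0; 0];
              [:: b21; 2 * b11; 0; 0; 0];
              [:: b31; b32; 3 * b11; b34; 0];
              [:: 0; 0; 0; b11; 0];
              [:: b51; 0; 0; b54; 2 * b11]].

Lemma M7_der u1 u2 u3 v3 u5 v5 : is_derivation (M7 u1 u2 u3 (2 * u2) v3 u5 v5).
Proof.
move=> x y; apply: cV5_ext => k hk.
rewrite [LHS]mulcoord [RHS]mxE !pm_coord // /pmc !mulcoord !mxrows //.
case: k hk => [|[|[|[|[|k]]]]] //= _; ring.
Qed.

Lemma der_form (D : 'M[C]_5) : is_derivation D ->
  exists u1 u2 u3 v3 u5 v5, D = M7 u1 u2 u3 (2 * u2) v3 u5 v5.
Proof.
move=> H.
have E a b k : (a < 5)%N -> (b < 5)%N -> (k < 5)%N ->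
   (D *m pi3_mul (basis5 C a) (basis5 C b)) (inord k) 0 =
   (pi3_mul (D *m basis5 C a) (basis5 C b) + pi3_mul (basis5 C a) (D *m basis5 C b)) (inord k) 0.
  by move=> *; rewrite H.
Ltac eq_at E a b k H := have := E a%N b%N k%N isT isT isT;
  rewrite [LHS]mulcoord [RHS]mxE !pm_coord // /pmc /= ?mul_basis // ?basis_coord //=;
  rewrite ?(mulr0, mulr1, mul0r, mul1r, addr0, add0r); move=> H.
eq_at E 3%N 0%N 0%N E300. eq_at E 3%N 0%N 1%N E301. eq_at E 3%N 0%N 2%N E302. eq_at E 3%N 0%N 3%N E303. eq_at E 3%N 0%N 4%N E304.
eq_at E 0%N 0%N 0%N E000. eq_at E 0%N 0%N 1%N E001. eq_at E 0%N 0%N 2%N E002. eq_at E 0%N 0%N 3%N E003. eq_at E 0%N 0%N 4%N E004.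
eq_at E 0%N 1%N 0%N E010. eq_at E 0%N 1%N 1%N E011. eq_at E 0%N 1%N 2%N E012. eq_at E 0%N 1%N 3%N E013. eq_at E 0%N 1%N 4%N E014.
eq_at E 3%N 3%N 0%N E330. eq_at E 3%N 3%N 1%N E331. eq_at E 3%N 3%N 2%N E332. eq_at E 3%N 3%N 3%N E333. eq_at E 3%N 3%N 4%N E334.
eq_at E 0%N 3%N 0%N E030. eq_at E 0%N 3%N 1%N E031. eq_at E 0%N 3%N 2%N E032. eq_at E 0%N 3%N 3%N E033. eq_at E 0%N 3%N 4%N E034.
clear E H.
have h33 : D (inord 3) (inord 3) = D (inord 0) (inord 0).
  move: E334 E034; rewrite -E301 -E304 => ->; rewrite add0r addr0 => /eqP.
  move/eqP=> e; apply: (addIr (D (inord 3) (inord 3))); rewrite e; ring.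
exists (D (inord 0) (inord 0)), (D (inord 1) (inord 0)), (D (inord 2) (inord 0)),
  (D (inord 2) (inord 3)), (D (inord 4) (inord 0)), (D (inord 4) (inord 3)).
apply: M5_ext => k l hk hl; rewrite mxrows //.
case: k hk => [|[|[|[|[|k]]]]] //= _; case: l hl => [|[|[|[|[|l]]]]] //= _;
 rewrite ?E012 ?E034 ?E014 ?E004 ?E001 ?E002 ?E011 -?E301 -?E302 -?E304 ?E000 ?E003 ?E010 ?E013
   ?E330 ?E331 ?E332 ?E333 ?h33; ring.
Qed.
End M.

Lemma two_neq0 (R : realType) : (2 : R[i]) != 0.
Proof. by rewrite pnatr_eq0. Qed.

Theorem theorem5p4 (R : realType) (T : 'M[R[i]]_5) :
  is_local_derivation T <->
  exists b11 b21 b31 b32 b34 b51 b54 : R[i],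
    T = mx_of_rows
          [:: [:: b11; 0; 0; 0; 0];
              [:: b21; 2 * b11; 0; 0; 0];
              [:: b31; b32; 3 * b11; b34; 0];
              [:: 0; 0; 0; b11; 0];
              [:: b51; 0; 0; b54; 2 * b11]].
Proof.
split.
- move=> H.
  have P (x : 'cV[R[i]]_5) : exists u1 u2 u3 v3 u5 v5 : R[i], T *m x = M7 u1 u2 u3 (2*u2) v3 u5 v5 *m x.
    have [D [hD ->]] := H x.
    have [u1 [u2 [u3 [v3 [u5 [v5 ->]]]]]] := der_form hD.
    by exists u1, u2, u3, v3, u5, v5.
  have C1 a k : (a < 5)%N -> (k < 5)%N -> exists u1 u2 u3 v3 u5 v5 : R[i],
      T (inord k) (inord a) = M7 u1 u2 u3 (2*u2) v3 u5 v5 (inord k) (inord a).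
    move=> ha hk; have [u1 [u2 [u3 [v3 [u5 [v5 e]]]]]] := P (basis5 _ a).
    by exists u1, u2, u3, v3, u5, v5; rewrite -(mul_basis T k ha) e mul_basis.
  have C2 a b k1 k2 : (a < 5)%N -> (b < 5)%N -> (k1 < 5)%N -> (k2 < 5)%N ->
    exists u1 u2 u3 v3 u5 v5 : R[i],
      T (inord k1) (inord a) + T (inord k1) (inord b) =
        M7 u1 u2 u3 (2*u2) v3 u5 v5 (inord k1) (inord a) + M7 u1 u2 u3 (2*u2) v3 u5 v5 (inord k1) (inord b) /\
      T (inord k2) (inord a) + T (inord k2) (inord b) =
        M7 u1 u2 u3 (2*u2) v3 u5 v5 (inord k2) (inord a) + M7 u1 u2 u3 (2*u2) v3 u5 v5 (inord k2) (inord b).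
    move=> ha hb hk1 hk2; have [u1 [u2 [u3 [v3 [u5 [v5 e]]]]]] := P (basis5 _ a + basis5 _ b).
    exists u1, u2, u3, v3, u5, v5.
    by rewrite -!(mul_basis2 T _ ha hb) e !mul_basis2.
  have [? [? [? [? [? [? z01]]]]]] := C1 1%N 0%N isT isT; rewrite mxrows //= in z01.
  have [? [? [? [? [? [? z02]]]]]] := C1 2%N 0%N isT isT; rewrite mxrows //= in z02.
  have [? [? [? [? [? [? z03]]]]]] := C1 3%N 0%N isT isT; rewrite mxrows //= in z03.
  have [? [? [? [? [? [? z04]]]]]] := C1 4%N 0%N isT isT; rewrite mxrows //= in z04.
  have [? [? [? [? [? [? z12]]]]]] := C1 2%N 1%N isT isT; rewrite mxrows //= in z12.
  have [? [? [? [? [? [? z13]]]]]] := C1 3%N 1%N isT isT; rewrite mxrows //= in z13.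
  have [? [? [? [? [? [? z14]]]]]] := C1 4%N 1%N isT isT; rewrite mxrows //= in z14.
  have [? [? [? [? [? [? z24]]]]]] := C1 4%N 2%N isT isT; rewrite mxrows //= in z24.
  have [? [? [? [? [? [? z30]]]]]] := C1 0%N 3%N isT isT; rewrite mxrows //= in z30.
  have [? [? [? [? [? [? z31]]]]]] := C1 1%N 3%N isT isT; rewrite mxrows //= in z31.
  have [? [? [? [? [? [? z32]]]]]] := C1 2%N 3%N isT isT; rewrite mxrows //= in z32.
  have [? [? [? [? [? [? z34]]]]]] := C1 4%N 3%N isT isT; rewrite mxrows //= in z34.
  have [? [? [? [? [? [? z41]]]]]] := C1 1%N 4%N isT isT; rewrite mxrows //= in z41.
  have [? [? [? [? [? [? z42]]]]]] := C1 2%N 4%N isT isT; rewrite mxrows //= in z42.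
  have h33 : T (inord 3) (inord 3) = T (inord 0) (inord 0).
    have [p [? [? [? [? [? [A B]]]]]]] := C2 0%N 3%N 0%N 3%N isT isT isT isT.
    rewrite !mxrows //= in A B; rewrite z03 z30 !(addr0, add0r) in A B.
    by rewrite A B.
  have h11 : T (inord 1) (inord 1) = 2 * T (inord 0) (inord 0).
    have [p [? [? [? [? [? [A B]]]]]]] := C2 1%N 3%N 1%N 3%N isT isT isT isT.
    rewrite !mxrows //= in A B; rewrite z13 z31 !(addr0, add0r) in A B.
    by rewrite A -h33 B.
  have h44 : T (inord 4) (inord 4) = 2 * T (inord 0) (inord 0).
    have [p [? [? [? [? [? [A B]]]]]]] := C2 1%N 4%N 1%N 4%N isT isT isT isT.
    rewrite !mxrows //= in A B; rewrite z14 z41 !(addr0, add0r) in A B.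
    by rewrite B -A h11.
  have h22 : T (inord 2) (inord 2) = 3 * T (inord 0) (inord 0).
    have [p [? [? [? [? [? [A B]]]]]]] := C2 2%N 4%N 2%N 4%N isT isT isT isT.
    rewrite !mxrows //= in A B; rewrite z24 z42 !(addr0, add0r) in A B.
    have hp : p = T (inord 0) (inord 0) by apply: (mulfI (two_neq0 R)); rewrite -B h44.
    by rewrite A hp.
  exists (T (inord 0) (inord 0)), (T (inord 1) (inord 0)), (T (inord 2) (inord 0)),
    (T (inord 2) (inord 1)), (T (inord 2) (inord 3)), (T (inord 4) (inord 0)), (T (inord 4) (inord 3)).
  apply: M5_ext => k l hk hl; rewrite mxrows //.
  case: k hk => [|[|[|[|[|k]]]]] //= _; case: l hl => [|[|[|[|[|l]]]]] //= _;
    by rewrite ?(z01, z02, z03, z04, z12, z13, z14, z24, z30, z31, z32, z34, z41, z42, h11, h22, h33, h44).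
- move=> [b11 [b21 [b31 [b32 [b34 [b51 [b54 ->]]]]]]] x.
  case: (eqVneq (x (inord 0) 0) 0) => hx0.
  + exists (M7 b11 (b32 / 2) b31 (2 * (b32 / 2)) b34 b51 b54); split; first exact: M7_der.
    have h2 : 2 * (b32 / 2) = b32 by rewrite mulrC divfK // two_neq0.
    apply: cV5_ext => k hk; rewrite !mulcoord !mxrows // hx0.
    case: k hk => [|[|[|[|[|k]]]]] //= _; rewrite ?h2; ring.
  + set u3 := (b31 * x (inord 0) 0 + b32 * x (inord 1) 0 - 2 * b21 * x (inord 1) 0) / x (inord 0) 0.
    exists (M7 b11 b21 u3 (2 * b21) b34 b51 b54); split; first exact: M7_der.
    apply: cV5_ext => k hk; rewrite !mulcoord !mxrows //.
    case: k hk => [|[|[|[|[|k]]]]] //= _; rewrite ?divfK //; try ring.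
Qed.
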